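(* Consider two independent types of stations: for $l=1,2$, initial positions form a homogeneous Poisson point process on $\mathbb R^2$ of intensity $\lambda_l$, each station moves at speed $v_l$ in an independent uniform direction; let $\lambda=\lambda_1+\lambda_2$. Let $\mathcal H^l$ be the head point process of type-$l$ stations and $\mathcal L_e(v_1,v_2)=\{(t,L(t)):t\in\mathbb R\}$, $L(t)$ the distance to the origin of the nearest station (of either type) at time $t$. For $s\in\mathbb R$, $u>0$, $v>0$ let $E^{s,v}_u=\{(t,h):h>0,\ v^2(t-s)^2+h^2<u^2\}$. Then for every point $(s,u)$ lying on the radial bird of some station: (i) $(s,u)\in\mathcal L_e(v_1,v_2)$ if and only if $\mathcal H^l(E^{s,v_l}_u)=0$ for $l=1,2$; (ii) the event in (i) has probability $e^{-\lambda\pi u^2}$, i.e. $\mathbb P(\mathcal H^1(E^{s,v_1}_u)=0,\ \mathcal H^2(E^{s,v_2}_u)=0)=e^{-\lambda\pi u^2}$.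
   Context: The head $(T,H)$ of a type-$l$ station is the time and value of its minimal distance to the origin; its radial bird is $\{(t,(v_l^2(t-T)^2+H^2)^{1/2}):t\in\mathbb R\}$. $\mathcal H^l$ is a Poisson process of intensity $v_l\,dt\otimes2\lambda_l\,dh$, and $\mathcal H^1,\mathcal H^2$ are independent. *)

(* Defs.v *)
From HB Require Import structures.
From mathcomp Require Import all_boot all_order all_algebra.
From mathcomp Require Import all_classical all_reals all_analysis.
From mathcomp Require Import measurable_realfun.
Set Implicit Arguments. Unset Strict Implicit. Unset Printing Implicit Defensive.
Import Order.TTheory GRing.Theory Num.Theory.
Local Open Scope classical_set_scope.
Local Open Scope ring_scope.

(* The (t,h) half-plane carrying the head point processes, with Borel sets. *)
Definition plane (R : realType) := (measurableTypeR R * measurableTypeR R)%type.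

Definition leb2 (R : realType) : set (plane R) -> \bar R :=
  (@lebesgue_measure R \x @lebesgue_measure R)%E.

Definition head_intensity (R : realType) (v lam : R) (A : set (plane R)) : \bar R :=
  ((v * (2 * lam))%:E * leb2 (A `&` [set p : plane R | (0 < p.2)%R]))%E.

Definition npoints (R : realType) (S A : set (plane R)) : \bar R :=
  (\esum_(x in S `&` A) 1)%E.

Definition poisson_p (R : realType) (m : R) (k : nat) : R :=
  expR (- m) * m ^+ k / k`!%:R.

Definition poisson_pp (R : realType) (d : measure_display) (Omega : measurableType d)
  (P : probability Omega R) (N : Omega -> set (plane R))
  (mu : set (plane R) -> \bar R) : Prop :=
  (forall A : set (plane R), measurable A -> (mu A < +oo)%E ->
     measurable_fun [set: Omega] (fun w : Omega => (npoints (N w) A : \bar R)) /\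
     forall k : nat,
       P [set w | npoints (N w) A = k%:R%:E] = (poisson_p (fine (mu A)) k)%:E) /\
  (forall (n : nat) (A : 'I_n -> set (plane R)) (k : 'I_n -> nat),
     (forall i, measurable (A i)) -> (forall i, (mu (A i) < +oo)%E) ->
     (forall i j, i != j -> A i `&` A j = set0) ->
     P (\bigcap_(i in [set: 'I_n]) [set w | npoints (N w) (A i) = (k i)%:R%:E])
     = (\prod_(i < n) P [set w | npoints (N w) (A i) = (k i)%:R%:E])%E).

(* Independence of two point processes: the sigma-algebras generated by their
   counts are independent (tested on the generating pi-system of finite
   intersections of count events). *)
Definition indep_pp (R : realType) (d : measure_display) (Omega : measurableType d)
  (P : probability Omega R) (N1 N2 : Omega -> set (plane R)) : Prop :=
  forall (n m : nat) (A : 'I_n -> set (plane R)) (k : 'I_n -> \bar R)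
         (B : 'I_m -> set (plane R)) (j : 'I_m -> \bar R),
    (forall i, measurable (A i)) -> (forall i, measurable (B i)) ->
    let E1 := \bigcap_(i in [set: 'I_n]) [set w | npoints (N1 w) (A i) = k i] in
    let E2 := \bigcap_(i in [set: 'I_m]) [set w | npoints (N2 w) (B i) = j i] in
    P (E1 `&` E2) = (P E1 * P E2)%E.

Definition bird (R : realType) (v : R) (p : plane R) (t : R) : R :=
  Num.sqrt (v ^+ 2 * (t - p.1) ^+ 2 + p.2 ^+ 2).

Definition Ldist (R : realType) (v1 v2 : R) (S1 S2 : set (plane R)) (t : R) : R :=
  inf ([set bird v1 p t | p in S1] `|` [set bird v2 p t | p in S2]).

Definition envelope (R : realType) (v1 v2 : R) (S1 S2 : set (plane R)) : set (R * R) :=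
  [set (t, Ldist v1 v2 S1 S2 t) | t in [set: R]].

Definition on_some_bird (R : realType) (v1 v2 : R) (S1 S2 : set (plane R)) (s u : R) : Prop :=
  (exists2 p, S1 p & u = bird v1 p s) \/ (exists2 p, S2 p & u = bird v2 p s).

Definition Eset (R : realType) (s v u : R) : set (plane R) :=
  [set p | 0 < p.2 /\ v ^+ 2 * (p.1 - s) ^+ 2 + p.2 ^+ 2 < u ^+ 2].

(* Main.v *)
Require Import Defs.
From HB Require Import structures.
From mathcomp Require Import all_boot all_order all_algebra.
From mathcomp Require Import all_classical all_reals all_analysis.
From mathcomp Require Import measurable_realfun.
From mathcomp Require Import ring lra.
Import Order.TTheory GRing.Theory Num.Theory.
Import numFieldNormedType.Exports.
Local Open Scope classical_set_scope.
Local Open Scope ring_scope.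

Lemma sect_Eset (R : realType) (s v u x : R) :
  xsection (Eset s v u) x = `]0, Num.sqrt (u ^+ 2 - v ^+ 2 * (x - s) ^+ 2)[%classic.
Proof.
rewrite /xsection /Eset; apply/seteqP; split => h /=; rewrite inE /= in_itv /=.
  move=> [h0 hl]; rewrite h0 /=.
  have c0 : 0 < u ^+ 2 - v ^+ 2 * (x - s) ^+ 2 by have := exprn_gt0 2 h0; lra.
  by rewrite -[h in h < _]gtr0_norm // -sqrtr_sqr ltr_sqrt //; lra.
move=> /andP[h0 hl]; split => //.
have c0 : 0 < u ^+ 2 - v ^+ 2 * (x - s) ^+ 2.
  rewrite ltNge; apply/negP => /ler0_sqrtr c0; move: hl; rewrite c0 => hl.
  by move: (lt_trans h0 hl); rewrite ltxx.
move: hl; rewrite -[h in h < _]gtr0_norm // -sqrtr_sqr ltr_sqrt // => hl.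
lra.
Qed.

Lemma leb2_Eset (R : realType) (s v u : R) :
  leb2 (Eset s v u) = (\int[lebesgue_measure]_x (Num.sqrt (u ^+ 2 - v ^+ 2 * (x - s) ^+ 2))%:E)%E.
Proof.
rewrite /leb2 /product_measure1 /=; apply: eq_integral => x _ /=.
rewrite sect_Eset lebesgue_measure_itv /= lte_fin.
case: ifPn => [_|]; first by rewrite oppr0 adde0.
rewrite -leNgt => h.
have -> : Num.sqrt (u ^+ 2 - v ^+ 2 * (x - s) ^+ 2) = 0.
  by apply/eqP; rewrite eq_le h sqrtr_ge0.
by [].
Qed.

Lemma int_restrict (R : realType) (s v u : R) : 0 < v -> 0 < u ->
  (\int[lebesgue_measure]_x (Num.sqrt (u ^+ 2 - v ^+ 2 * (x - s) ^+ 2))%:E =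
   \int[lebesgue_measure]_(x in `[(s - u / v)%R, (s + u / v)%R]) (Num.sqrt (u ^+ 2 - v ^+ 2 * (x - s) ^+ 2))%:E)%E.
Proof.
move=> v0 u0; rewrite [RHS]integral_mkcond; apply: eq_integral => x _.
rewrite patchE; case: ifPn => // /negP; rewrite inE /= in_itv /= => xn.
have -> : Num.sqrt (u ^+ 2 - v ^+ 2 * (x - s) ^+ 2) = 0 => //.
apply: ler0_sqrtr.
set w := u / v.
have uw : u = v * w by rewrite /w mulrC divfK // gt_eqF.
have w0 : 0 < w by rewrite divr_gt0.
rewrite uw.
case: (lerP 0 (x - s)) => xs.
  have h : w < x - s.
    rewrite ltNge; apply/negP => h; apply: xn.
    apply/andP; split; rewrite -/w; lra.
  have k : 0 < v ^+ 2 * ((x - s - w) * (x - s + w)) by rewrite mulr_gt0 ?exprn_gt0 ?mulr_gt0 //; lra.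
  move: k; rewrite exprMn; nra.
have h : w < s - x.
  rewrite ltNge; apply/negP => h; apply: xn.
  apply/andP; split; rewrite -/w; lra.
have k : 0 < v ^+ 2 * ((s - x - w) * (s - x + w)) by rewrite mulr_gt0 ?exprn_gt0 ?mulr_gt0 //; lra.
move: k; rewrite exprMn; nra.
Qed.

Lemma subst_step (R : realType) (s v u : R) : 0 < v -> 0 < u ->
  (\int[lebesgue_measure]_(x in `[(s - u / v)%R, (s + u / v)%R]) (Num.sqrt (u ^+ 2 - v ^+ 2 * (x - s) ^+ 2))%:E =
   \int[lebesgue_measure]_(x in `[(- (pi / 2))%R, (pi / 2)%R]) ((u ^+ 2 / v) * cos x ^+ 2)%:E)%E.
Proof.
move=> v0 u0.
pose c := u / v.
have c0 : 0 < c by rewrite divr_gt0.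
pose F := fun t : R => s + c * sin t.
pose G := fun t : R => Num.sqrt (u ^+ 2 - v ^+ 2 * (t - s) ^+ 2).
have dF : forall t : R, is_derive t (1:R) F (c * cos t).
  move=> t.
  have h := is_deriveD (is_derive_cst s t 1) (is_deriveZ c (is_derive_sin t)).
  have -> : F = (cst s + c \*: (@sin R))%R by apply/funext.
  by apply: (is_derive_eq h); rewrite add0r.
have F'E : forall t, (F^`())%classic t = c * cos t.
  by move=> t; rewrite derive1E; apply: derive_val.
have Fa : F (- (pi / 2)) = s - u / v by rewrite /F sinN sin_pihalf mulrN1.
have Fb : F (pi / 2) = s + u / v by rewrite /F sin_pihalf mulr1.
have Fcont : forall t : R, F x @[x --> t] --> F t.
  move=> t; apply: cvgD; first exact: cvg_cst.
  by apply: cvgM; [exact: cvg_cst | exact: continuous_sin].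
have F'cont : forall t : R, (F^`())%classic x @[x --> t] --> (F^`())%classic t.
  move=> t; rewrite (_ : (F^`())%classic = fun t => c * cos t); last by apply/funext => ?; rewrite F'E.
  by apply: cvgM; [exact: cvg_cst | exact: continuous_cos].
have := @integration_by_substitution_increasing R F G (- (pi / 2)) (pi / 2).
rewrite Fa Fb => ->.
- apply: eq_integral => t; rewrite inE /= in_itv /= => tI.
  congr (_%:E); rewrite [LHS]/GRing.mul /= F'E /G /F.
  have e : u ^+ 2 - v ^+ 2 * (s + c * sin t - s) ^+ 2 = (u * cos t) ^+ 2.
    rewrite (addrC s) addrK [RHS]exprMn cos2sin2 /c; field; lra.
  rewrite e sqrtr_sqr ger0_norm; last exact: mulr_ge0 (ltW u0) (cos_ge0_pihalf tI).
  rewrite /c; field; lra.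
- by have := pi_ge0 R; lra.
- move=> x y xI yI xy; rewrite /F ltrD2l ltr_pM2l //.
  by rewrite ltr_sin.
- by move=> x _; apply: F'cont.
- by apply/cvg_ex; exists ((F^`())%classic (- (pi / 2))); apply: cvg_at_right_filter; apply: F'cont.
- by apply/cvg_ex; exists ((F^`())%classic (pi / 2)); apply: cvg_at_left_filter; apply: F'cont.
- split.
  + by move=> x _; apply: ex_derive; apply: dF.
  + by apply: cvg_at_right_filter; apply: Fcont.
  + by apply: cvg_at_left_filter; apply: Fcont.
- apply: continuous_subspaceT => x.
  apply: (@continuous_comp _ _ _ (fun t : R => u ^+ 2 - v ^+ 2 * (t - s) ^+ 2) (@Num.sqrt R)); last exact: sqrt_continuous.
  apply: cvgB; first exact: cvg_cst.
  apply: cvgM; first exact: cvg_cst.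
  apply: (@continuous_comp _ _ _ (fun t : R => t - s) (fun t : R => t ^+ 2)); last exact: exprn_continuous.
  by apply: cvgB; [exact: cvg_id | exact: cvg_cst].
Qed.

Lemma ftc_step (R : realType) (K : R) :
  (\int[lebesgue_measure]_(x in `[(- (pi / 2))%R, (pi / 2)%R]) (K * cos x ^+ 2)%:E =
   (K * (pi / 2))%:E)%E.
Proof.
pose H := fun t : R => K / 2 * (t + sin t * cos t).
have dH : forall t : R, is_derive t (1:R) H (K * cos t ^+ 2).
  move=> t.
  have h := is_deriveZ (K / 2) (is_deriveD (is_derive_id t (1:R))
              (is_deriveM (is_derive_sin t) (is_derive_cos t))).
  have -> : H = ((K / 2) \*: (id + (@sin R) * (@cos R)))%R by apply/funext.
  apply: (is_derive_eq h).
  change (K / 2 * (1 + (sin t * - sin t + cos t * cos t)) = K * cos t ^+ 2).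
  have E : forall a b k : R, a ^+ 2 + b ^+ 2 = 1 -> k / 2 * (1 + (b * - b + a * a)) = k * a ^+ 2.
    move=> a b k ab; transitivity (k / 2 * ((a ^+ 2 + b ^+ 2) + (b * - b + a * a))); first by rewrite ab.
    by field.
  exact: (E _ _ _ (cos2Dsin2 t)).
have Hc : forall t : R, H x @[x --> t] --> H t.
  by move=> t; apply/differentiable_continuous/derivable1_diffP; apply: ex_derive; apply: dH.
rewrite (@continuous_FTC2 _ _ H).
- by rewrite /H sinN cosN sin_pihalf cos_pihalf -EFinB; congr (_%:E); field.
- by have := pi_gt0 R; lra.
- apply: continuous_subspaceT => x.
  apply: cvgM; first exact: cvg_cst.
  apply: (@continuous_comp _ _ _ (@cos R) (fun t : R => t ^+ 2)); last exact: exprn_continuous.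
  exact: continuous_cos.
- split.
  + by move=> x _; apply: ex_derive; apply: dH.
  + by apply: cvg_at_right_filter; apply: Hc.
  + by apply: cvg_at_left_filter; apply: Hc.
- by move=> x _; rewrite derive1E; apply: derive_val.
Qed.

Lemma leb2_Eset_val (R : realType) (s v u : R) : 0 < v -> 0 < u ->
  leb2 (Eset s v u) = ((u ^+ 2 / v) * (pi / 2))%:E.
Proof.
move=> v0 u0; rewrite leb2_Eset int_restrict // subst_step //; exact: ftc_step.
Qed.
Lemma measurable_Eset (R : realType) (s v u : R) : measurable (Eset s v u : set (plane R)).
Proof.
have mf : measurable_fun setT (fun p : plane R => v ^+ 2 * (p.1 - s) ^+ 2 + p.2 ^+ 2).
  apply: measurable_funD.
    apply: measurable_funM; first exact: measurable_cst.
    apply: measurable_funX; apply: measurable_funB; [exact: measurable_fst | exact: measurable_cst].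
  by apply: measurable_funX; exact: measurable_snd.
have ms : measurable_fun setT (fun p : plane R => p.2) by exact: measurable_snd.
have -> : Eset s v u = (setT `&` (fun p : plane R => v ^+ 2 * (p.1 - s) ^+ 2 + p.2 ^+ 2) @^-1` `]-oo, u ^+ 2[)
   `&` (setT `&` (fun p : plane R => p.2) @^-1` `]0, +oo[).
  apply/seteqP; split => p /=; rewrite /Eset /= !in_itv /= ?andbT.
    by move=> [h1 h2]; split; split.
  by move=> [[_ h1] [_ h2]]; split.
apply: measurableI.
  by apply: mf => //; exact: measurable_itv.
by apply: ms => //; exact: measurable_itv.
Qed.

Lemma measurable_neg (R : realType) : measurable ([set p : plane R | p.2 <= 0]).
Proof.
have ms : measurable_fun setT (fun p : plane R => p.2) by exact: measurable_snd.
have -> : [set p : plane R | p.2 <= 0] = setT `&` (fun p : plane R => p.2) @^-1` `]-oo, 0].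
  by apply/seteqP; split => p /=; rewrite ?in_itv /=; [move=> h; split | case].
by apply: ms => //; exact: measurable_itv.
Qed.

Lemma npoints_eq0 (R : realType) (S A : set (plane R)) :
  npoints S A = 0%E <-> S `&` A = set0.
Proof.
split; last by rewrite /npoints => ->; rewrite esum_set0.
move=> h; apply/seteqP; split => // x Sx; exfalso.
have : (1 <= npoints S A)%E.
  apply: esum_ge; exists [set x].
    by split; [exact: finite_set1 | move=> y ->].
  by rewrite fsbig_set1.
by rewrite h lee_fin ler10.
Qed.

Lemma sqrt_lt (R : realType) (u x : R) : 0 < u -> (Num.sqrt x < u) = (x < u ^+ 2).
Proof.
move=> u0; rewrite -[in LHS](gtr0_norm u0) -sqrtr_sqr.
by rewrite ltr_sqrt // exprn_gt0.
Qed.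

Lemma Eset_bird (R : realType) (s v u : R) (p : plane R) : 0 < u -> 0 < p.2 ->
  Eset s v u p <-> bird v p s < u.
Proof.
move=> u0 p0; rewrite /Eset /bird /=.
rewrite sqrt_lt // -opprB sqrrN; split; [by case | by move=> h; split].
Qed.

Lemma core (R : realType) (S1 S2 : set (plane R)) (v1 v2 s u : R) : 0 < u ->
  (forall p, S1 p -> 0 < p.2) -> (forall p, S2 p -> 0 < p.2) ->
  on_some_bird v1 v2 S1 S2 s u ->
  ((s, u) \in envelope v1 v2 S1 S2 <->
   (npoints S1 (Eset s v1 u) = 0%E /\ npoints S2 (Eset s v2 u) = 0%E)).
Proof.
move=> u0 pos1 pos2 osb.
set B := [set bird v1 p s | p in S1] `|` [set bird v2 p s | p in S2].
have Blb : lbound B 0.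
  by move=> x [[p _ <-]|[p _ <-]]; rewrite /bird sqrtr_ge0.
have hB : has_lbound B by exists 0.
have uB : B u.
  by case: osb => [[p Sp ->]|[p Sp ->]]; [left|right]; exists p.
have envE : (s, u) \in envelope v1 v2 S1 S2 <-> u = inf B.
  rewrite inE /envelope /Ldist -/B; split.
    by move=> [t _ [ts tu]]; rewrite -tu ts.
  by move=> ->; exists s.
rewrite envE !npoints_eq0; split.
  move=> uinf; split; apply/seteqP; split => // p [Sp Ep]; exfalso.
    have := (Eset_bird _ _ _ _ _ u0 (pos1 p Sp)).1 Ep.
    have : inf B <= bird v1 p s by apply: ge_inf => //; left; exists p.
    by rewrite -uinf => h1 h2; move: (le_lt_trans h1 h2); rewrite ltxx.
  have := (Eset_bird _ _ _ _ _ u0 (pos2 p Sp)).1 Ep.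
  have : inf B <= bird v2 p s by apply: ge_inf => //; right; exists p.
  by rewrite -uinf => h1 h2; move: (le_lt_trans h1 h2); rewrite ltxx.
move=> [e1 e2]; apply/eqP; rewrite eq_le; apply/andP; split.
  apply: lb_le_inf; first by exists u.
  move=> x [[p Sp <-]|[p Sp <-]]; rewrite leNgt; apply/negP => h.
    have : (S1 `&` Eset s v1 u) p by split => //; apply/(Eset_bird _ _ _ _ _ u0 (pos1 p Sp)).
    by rewrite e1.
  have : (S2 `&` Eset s v2 u) p by split => //; apply/(Eset_bird _ _ _ _ _ u0 (pos2 p Sp)).
  by rewrite e2.
exact: ge_inf.
Qed.

Lemma pp_zero (R : realType) (d : measure_display) (Omega : measurableType d)
  (P : probability Omega R) (H : Omega -> set (plane R)) mu (A : set (plane R)) (m : R) :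
  poisson_pp P H mu -> measurable A -> mu A = m%:E ->
  measurable [set w | npoints (H w) A = 0%E] /\
  P [set w | npoints (H w) A = 0%E] = (expR (- m))%:E.
Proof.
move=> [PPa _] mA muA.
have fin : (mu A < +oo)%E by rewrite muA ltry.
have [mf Pk] := PPa A mA fin.
split.
  have := mf measurableT [set 0%E] (emeasurable_set1 _); rewrite setTI.
  by [].
have := Pk 0%N; rewrite muA /= /poisson_p expr0 mulr1 fact0 divr1.
by rewrite mulr0n.
Qed.

Theorem lemma7p4 (R : realType) (d : measure_display) (Omega : measurableType d)
  (P : probability Omega R) (lam1 lam2 v1 v2 : R)
  (H1 H2 : Omega -> set (plane R)) :
  0 < lam1 -> 0 < lam2 -> 0 < v1 -> 0 < v2 ->
  poisson_pp P H1 (head_intensity v1 lam1) ->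
  poisson_pp P H2 (head_intensity v2 lam2) ->
  indep_pp P H1 H2 ->
  {ae P, forall w,
     forall s u, 0 < u -> on_some_bird v1 v2 (H1 w) (H2 w) s u ->
       ((s, u) \in envelope v1 v2 (H1 w) (H2 w) <->
        (npoints (H1 w) (Eset s v1 u) = 0%E /\ npoints (H2 w) (Eset s v2 u) = 0%E))} /\
  (forall s u, 0 < u ->
     P [set w | npoints (H1 w) (Eset s v1 u) = 0%E /\ npoints (H2 w) (Eset s v2 u) = 0%E]
     = (expR (- ((lam1 + lam2) * pi * u ^+ 2)))%:E).
Proof.
move=> l1 l2 v1p v2p PP1 PP2 Ind.
pose Neg := [set p : plane R | p.2 <= 0].
have mNeg : measurable Neg := measurable_neg R.
have muNeg : forall v lam : R, head_intensity v lam Neg = (0:R)%:E.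
  move=> v lam; rewrite /head_intensity.
  have -> : Neg `&` [set p : plane R | 0 < p.2] = set0.
    apply/seteqP; split => // p [/= h1 h2].
    by have := lt_le_trans h2 h1; rewrite ltxx.
  have -> : leb2 (set0 : set (plane R)) = 0%E.
    by rewrite /leb2 /product_measure1 /=; apply: integral0_eq => x _ /=; rewrite /xsection /= (_ : [set y | (x, y) \in set0] = set0) ?measure0 //; apply/seteqP; split => y /=; rewrite inE.
  by rewrite mule0.
have muE : forall v lam s u : R, 0 < v -> 0 < u ->
    head_intensity v lam (Eset s v u) = (v * (2 * lam) * (u ^+ 2 / v * (pi / 2)))%:E.
  move=> v lam s u v0 u0; rewrite /head_intensity.
  have -> : Eset s v u `&` [set p : plane R | 0 < p.2] = Eset s v u.
    by apply/setIidl => p [].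
  by rewrite leb2_Eset_val // -EFinM.
have bc : forall F : set Omega, \bigcap_(i in [set: 'I_1]) F = F.
  by move=> F; apply/seteqP; split => [w h|w h i _ //]; exact: (h ord0 I).
have indep1 : forall A B : set (plane R), measurable A -> measurable B ->
    P ([set w | npoints (H1 w) A = 0%E] `&` [set w | npoints (H2 w) B = 0%E]) =
    (P [set w | npoints (H1 w) A = 0%E] * P [set w | npoints (H2 w) B = 0%E])%E.
  move=> A B mA mB.
  move: (Ind 1%N 1%N (fun _ => A) (fun _ => 0%E) (fun _ => B) (fun _ => 0%E) (fun _ => mA) (fun _ => mB)) => /=.
  by rewrite !bc.
have [mZ1 PZ1] := pp_zero _ _ _ _ _ _ _ _ PP1 mNeg (muNeg v1 lam1).
have [mZ2 PZ2] := pp_zero _ _ _ _ _ _ _ _ PP2 mNeg (muNeg v2 lam2).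
split.
  exists (~` ([set w | npoints (H1 w) Neg = 0%E] `&` [set w | npoints (H2 w) Neg = 0%E])).
  split.
  - by apply: measurableC; exact: measurableI.
  - rewrite probability_setC; last exact: measurableI.
    by rewrite indep1 // PZ1 PZ2 oppr0 expR0 mule1 subee.
  - move=> w /= nQ [z1 z2]; apply: nQ => s u u0 osb; apply: core => //.
      move=> p Hp; rewrite ltNge; apply/negP => h.
      have : (H1 w `&` Neg) p by split.
      by rewrite (proj1 (npoints_eq0 _ _ _) z1).
    move=> p Hp; rewrite ltNge; apply/negP => h.
    have : (H2 w `&` Neg) p by split.
    by rewrite (proj1 (npoints_eq0 _ _ _) z2).
move=> s u u0.
have [mE1 PE1] := pp_zero _ _ _ _ _ _ _ _ PP1 (measurable_Eset _ s v1 u) (muE v1 lam1 s u v1p u0).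
have [mE2 PE2] := pp_zero _ _ _ _ _ _ _ _ PP2 (measurable_Eset _ s v2 u) (muE v2 lam2 s u v2p u0).
have -> : [set w | npoints (H1 w) (Eset s v1 u) = 0%E /\ npoints (H2 w) (Eset s v2 u) = 0%E]
  = [set w | npoints (H1 w) (Eset s v1 u) = 0%E] `&` [set w | npoints (H2 w) (Eset s v2 u) = 0%E] by [].
rewrite indep1; last 2 first.
- exact: measurable_Eset.
- exact: measurable_Eset.
have -> : P [set w | npoints (H1 w) (Eset s v1 u) = 0%R] =
  (expR (- (v1 * (2 * lam1) * (u ^+ 2 / v1 * (pi / 2)))))%:E := PE1.
have -> : P [set w | npoints (H2 w) (Eset s v2 u) = 0%R] =
  (expR (- (v2 * (2 * lam2) * (u ^+ 2 / v2 * (pi / 2)))))%:E := PE2.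
rewrite -EFinM -expRD; congr (expR _)%:E.
by field; rewrite !gt_eqF.
Qed.
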